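(* Let $p\in(0,1)$ and consider the house-of-cards Markov chain on state space $\mathbb{N}\cup\{0\}$ with transition probabilities $p_{i0}=p$ and $p_{i(i+1)}=1-p$ for all $i\in\mathbb{N}\cup\{0\}$ (and $p_{ik}=0$ otherwise). Then there do not exist positive reals $\{\alpha_k\}_{k\ge0},\{\beta_i\}_{i\ge0}$ and constants $M_1,M_2>0$ such that $$\sum_{k=0}^\infty p_{ik}\alpha_k\le M_1\beta_i\ \ \text{for all } i\ge0\qquad\text{and}\qquad \sum_{i=0}^\infty p_{ik}\beta_i\le M_2\alpha_k\ \ \text{for all }k\ge0.$$ *)

(* Defs.v *)
From Stdlib Require Import Reals.
From Coquelicot Require Import Coquelicot.
Open Scope R_scope.

Definition hoc (p : R) (i k : nat) : R :=
  (if Nat.eqb k 0 then p else 0) + (if Nat.eqb k (S i) then 1 - p else 0).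

(* "sum_{n>=0} a n <= c" for a series of nonnegative terms (value in [0,+oo]):
   the series converges and its sum is at most c. *)
Definition series_le (a : nat -> R) (c : R) : Prop :=
  ex_series a /\ Series a <= c.

(* Main.v *)
Require Import Defs.
From Stdlib Require Import Reals Lra.
From Coquelicot Require Import Coquelicot.
Open Scope R_scope.

Lemma series_nonneg (a : nat -> R) : (forall n, 0 <= a n) -> ex_series a -> 0 <= Series a.
Proof.
  intros H He.
  assert (E : Series (fun n => 0 * a n) = 0) by (rewrite Series_scal_l; ring).
  rewrite <- E. apply Series_le; auto. intros n; split; [lra|]. rewrite Rmult_0_l. apply H.
Qed.

Theorem mainTheorem6 (p : R) (hp0 : 0 < p) (hp1 : p < 1) :
  ~ exists (alpha beta : nat -> R) (M1 M2 : R),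
      (forall k, 0 < alpha k) /\ (forall i, 0 < beta i) /\ 0 < M1 /\ 0 < M2 /\
      (forall i, series_le (fun k => hoc p i k * alpha k) (M1 * beta i)) /\
      (forall k, series_le (fun i => hoc p i k * beta i) (M2 * alpha k)).
Proof.
  intros [alpha [beta [M1 [M2 [Ha [Hb [HM1 [HM2 [H1 H2]]]]]]]]].
  assert (Hlow : forall i, p * alpha 0%nat <= M1 * beta i).
  { intros i. destruct (H1 i) as [He Hs].
    rewrite Series_incr_1 in Hs by exact He.
    assert (0 <= Series (fun k => hoc p i (S k) * alpha (S k))).
    { apply series_nonneg.
      - intros n. unfold hoc. simpl. apply Rmult_le_pos; [|left; apply Ha].
        destruct (Nat.eqb n i); lra.
      - apply (ex_series_incr_1 (fun k => hoc p i k * alpha k)). exact He. }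
    unfold hoc in Hs at 1. simpl in Hs. lra. }
  destruct (H2 0%nat) as [He _].
  apply ex_series_lim_0 in He.
  set (c := p * (p * alpha 0%nat / M1)).
  assert (Hc : 0 < c).
  { unfold c. apply Rmult_lt_0_compat; auto. unfold Rdiv.
    apply Rmult_lt_0_compat; [apply Rmult_lt_0_compat; auto|]. apply Rinv_0_lt_compat; auto. }
  assert (Hle : forall n, c <= hoc p n 0 * beta n).
  { intros n. unfold hoc. simpl. rewrite Rplus_0_r. unfold c.
    apply Rmult_le_compat_l; [lra|]. apply Rmult_le_reg_l with M1; auto.
    field_simplify; [|lra]. specialize (Hlow n). lra. }
  pose proof (is_lim_seq_le (fun _ => c) _ c 0 Hle (is_lim_seq_const c) He) as Hr.
  simpl in Hr. lra.
Qed.
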